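(* Let $n\ge1$, $k\ge1$, let $t\neq0$, and let $a_1,\dots,a_n>0$ be pairwise distinct. Then \[ \theta_{n;k}(t)=(-1)^{n-1}\sum_{j=1}^{n}\frac{\prod_{m=1}^{n}\big(\frac{1-t}{a_j t}+\frac1{a_m}\big)}{\prod_{\ell=1,\ell\neq j}^{n}\big(\frac1{a_j}-\frac1{a_\ell}\big)}\;a_j^{k+1}\,t^{k}. \]
   Context: Let $\boldsymbol a=(a_j)_{j\ge1}$ be a sequence of positive reals. For integers $n\ge1$, $k\ge0$ let $\mathcal M_{n,k}=\{(\ell_1,\dots,\ell_k)\in\mathbb N^k: n\ge\ell_1\ge\cdots\ge\ell_k\ge1\}$. For $\vec\ell\in\mathcal M_{n,k}$ let $\sigma(\vec\ell)=|\{1\le j\le k-1:\ell_j=\ell_{j+1}\}|$ and $w(\vec\ell)=\prod_{j=1}^k a_{\ell_j}$. Define $\theta_{n;k}(t)=\sum_{\vec\ell\in\mathcal M_{n,k}}w(\vec\ell)\,t^{\sigma(\vec\ell)}$. *)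

(* Defs.v *)
From HB Require Import structures.
From mathcomp Require Import all_boot all_order all_algebra.
Set Implicit Arguments. Unset Strict Implicit. Unset Printing Implicit Defensive.
Import Order.TTheory GRing.Theory Num.Theory.
Local Open Scope ring_scope.

(* The sequence a = (a_j)_{j>=1} is a function a : nat -> R; only a_1, a_2, ... matter. *)

(* Membership in M_{n,k}: a k-tuple (l_1,...,l_k) of naturals with
   n >= l_1 >= ... >= l_k >= 1.  Entries are drawn from 'I_n.+1 = {0..n},
   so l_j <= n is automatic; we require l_j >= 1 and weak decrease. *)
Definition inM (n k : nat) (l : k.-tuple 'I_n.+1) : bool :=
  all (fun x : 'I_n.+1 => (0 < x)%N) l &&
  sorted (fun x y : nat => (y <= x)%N) (map (@nat_of_ord n.+1) l).

Definition sigma (l : seq nat) : nat :=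
  count (fun p : nat * nat => p.1 == p.2) (zip l (behead l)).

Definition weight (R : nzRingType) (a : nat -> R) (l : seq nat) : R :=
  \prod_(x <- l) a x.

Definition theta (R : nzRingType) (a : nat -> R) (n k : nat) (t : R) : R :=
  \sum_(l : k.-tuple 'I_n.+1 | inM l)
    weight a (map (@nat_of_ord n.+1) l) * t ^+ sigma (map (@nat_of_ord n.+1) l).

(* Main.v *)
Require Import Defs.
From HB Require Import structures.
From mathcomp Require Import all_boot all_order all_algebra ring.
Set Implicit Arguments. Unset Strict Implicit. Unset Printing Implicit Defensive.
Import Order.TTheory GRing.Theory Num.Theory.
Local Open Scope ring_scope.

Section Comb.
Variables (R : realFieldType) (a : nat -> R) (n : nat) (t : R).
Local Notation T := 'I_n.+1.
Definition sv k (l : k.-tuple T) : seq nat := map (@nat_of_ord n.+1) l.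
Definition PP (x : nat) k (l : k.-tuple T) : bool := inM l && all (fun y : T => (y <= x)%N) l.

Lemma PP_cons x k (y : T) (l : k.-tuple T) :
  PP x [tuple of y :: l] = ((0 < y) && (y <= x))%N && PP y l.
Proof.
rewrite /PP /inM /= path_sortedE; last by move=> p q r /= h1 h2; exact: leq_trans h2 h1.
rewrite all_map.
case: (leqP y x) => hyx; last by rewrite !(andbF, andFb).
rewrite andbT.
case hB: (all (preim _ _) l); last by rewrite !andbF.
have -> : all (fun z : T => (z <= x)%N) l.
  apply/allP => z zl; have hz := allP hB z zl; simpl in hz; exact: leq_trans hz hyx.
by rewrite !andbT; case: (0 < y)%N; case: (all _ _); case: (sorted _ _).
Qed.

Lemma decomp x k (G : seq nat -> R) :
  \sum_(l : k.+1.-tuple T | PP x l) G (sv l) =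
  \sum_(y : T | ((0 < y) && (y <= x))%N) \sum_(l : k.-tuple T | PP y l) G (nat_of_ord y :: sv l).
Proof.
rewrite pair_big_dep /=.
rewrite (reindex (fun p : T * k.-tuple T => [tuple of p.1 :: p.2])) /=.
  by apply: eq_bigl => -[y l] /=; rewrite PP_cons.
exists (fun l : k.+1.-tuple T => (thead l, [tuple of behead l])).
  by move=> [y l] _ /=; rewrite theadE; congr pair; apply: val_inj.
by move=> l _ /=; apply: val_inj => /=; case: l => -[|? ?].
Qed.

Lemma weight_cons y s : weight a (y :: s) = a y * weight a s.
Proof. by rewrite /weight big_cons. Qed.

Lemma sigma_cons2 p y s : sigma (p :: y :: s) = ((p == y) + sigma (y :: s))%N.
Proof. by []. Qed.

Definition th x k := \sum_(l : k.-tuple T | PP x l) weight a (sv l) * t ^+ sigma (sv l).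
Definition Hh (p : nat) k := \sum_(l : k.-tuple T | PP p l) weight a (sv l) * t ^+ sigma (p :: sv l).

Lemma th_rec x k : th x k.+1 = \sum_(y : T | ((0 < y) && (y <= x))%N) a y * Hh y k.
Proof.
rewrite /th (decomp x k (fun s => weight a s * t ^+ sigma s)).
apply: eq_bigr => y _; rewrite /Hh big_distrr /=; apply: eq_bigr => l _.
by rewrite weight_cons mulrA.
Qed.

Lemma Hh_rec p k : Hh p k.+1 =
  \sum_(y : T | ((0 < y) && (y <= p))%N) a y * t ^+ (p == y) * Hh y k.
Proof.
rewrite /Hh (decomp p k (fun s => weight a s * t ^+ sigma (p :: s))).
apply: eq_bigr => y _; rewrite big_distrr /=; apply: eq_bigr => l _.
by rewrite sigma_cons2 weight_cons exprD; ring.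
Qed.

Lemma tup0_sum (P : pred (0.-tuple T)) (F : 0.-tuple T -> R) :
  P [tuple] -> \sum_(l : 0.-tuple T | P l) F l = F [tuple].
Proof.
move=> hP; rewrite (big_pred1 [tuple]) // => l /=.
by rewrite (tuple0 l) hP; apply/esym/eqP.
Qed.

Lemma th0 x : th x 0 = 1.
Proof. by rewrite /th tup0_sum //= /weight big_nil mul1r. Qed.

Lemma Hh0 x : Hh x 0 = 1.
Proof. by rewrite /Hh tup0_sum //= /weight big_nil mul1r. Qed.

Lemma split_last x (f : T -> R) : (x.+1 <= n)%N ->
  \sum_(y : T | ((0 < y) && (y <= x.+1))%N) f y =
  \sum_(y : T | ((0 < y) && (y <= x))%N) f y + f (inord x.+1).
Proof.
move=> hx; have hi : nat_of_ord (inord x.+1 : T) = x.+1 by rewrite inordK // ltnS.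
rewrite (bigD1 (inord x.+1)) /=; last by rewrite hi ltn0Sn leqnn.
rewrite addrC; congr (_ + _); apply: eq_bigl => y.
rewrite -val_eqE /= hi.
case: (nat_of_ord y) => [|m] //=.
by rewrite eqSS ltnS ltn_neqAle andbC.
Qed.

Lemma th_zero k : th 0 k.+1 = 0.
Proof.
rewrite th_rec big_pred0 // => y.
by rewrite leqn0; case: (nat_of_ord y).
Qed.

Lemma th_step1 x k : (x.+1 <= n)%N ->
  th x.+1 k.+1 = th x k.+1 + a x.+1 * Hh x.+1 k.
Proof.
move=> hx; rewrite !th_rec split_last // inordK //.
Qed.

Lemma Hh_step x k : (x.+1 <= n)%N ->
  Hh x.+1 k.+1 = th x k.+1 + t * (a x.+1 * Hh x.+1 k).
Proof.
move=> hx; rewrite Hh_rec split_last // inordK // eqxx expr1 th_rec.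
congr (_ + _); last by ring.
apply: eq_bigr => y /andP[_ hy].
rewrite (_ : (x.+1 == y) = false) ?expr0 ?mulr1 //.
by apply/eqP => e; rewrite -e ltnn in hy.
Qed.

Lemma th_rec1 x : (x.+1 <= n)%N -> th x.+1 1 = th x 1 + a x.+1.
Proof. by move=> hx; rewrite th_step1 // Hh0 mulr1. Qed.

Lemma th_rec2 x k : (x.+1 <= n)%N ->
  th x.+1 k.+2 = th x k.+2 + a x.+1 * t * th x.+1 k.+1 + a x.+1 * (1 - t) * th x k.+1.
Proof.
move=> hx; rewrite th_step1 // Hh_step //.
have := th_step1 k hx => ->.
ring.
Qed.
End Comb.
Section Alg.
Variables (R : realFieldType) (b : nat -> R) (n : nat) (t : R).
Hypothesis ht : t != 0.
Hypothesis hb : forall m, (m < n)%N -> b m != 0.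
Hypothesis hd : forall i j, (i < n)%N -> (j < n)%N -> i != j -> b i != b j.

Definition c := (1 - t) / t.
Definition q := (t - 1) / t.
Definition RR x j := t^-1 * \prod_(0 <= m < x) (if m != j then (b j + c * b m) / (b j - b m) else 1).
Definition G x z := \prod_(0 <= m < x) ((1 + (1 - t) * b m * z) / (1 - b m * t * z)).
Definition V x z := q ^+ x + \sum_(0 <= j < x) RR x j / (1 - b j * t * z).
Definition U x k := \sum_(0 <= j < x) RR x j * (b j * t) ^+ k.

Lemma RR_step x j : (j < x)%N -> RR x.+1 j = RR x j * ((b j + c * b x) / (b j - b x)).
Proof.
move=> hj; rewrite /RR big_nat_recr //= mulrA.
by rewrite (_ : (x != j) = true) //; apply/eqP => e; rewrite e ltnn in hj.
Qed.

Lemma RR_last x : RR x.+1 x = t^-1 * \prod_(0 <= m < x) ((b x + c * b m) / (b x - b m)).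
Proof.
rewrite /RR big_nat_recr //= eqxx mulr1; congr (_ * _).
apply: eq_big_nat => m /andP[_ hm].
by rewrite (_ : (m != x) = true) //; apply/eqP => e; rewrite e ltnn in hm.
Qed.

Lemma G_step x z : G x.+1 z = G x z * ((1 + (1 - t) * b x * z) / (1 - b x * t * z)).
Proof. by rewrite /G big_nat_recr. Qed.

Lemma GV x : (x <= n)%N -> forall z, (forall j, (j < x)%N -> 1 - b j * t * z != 0) ->
  G x z = V x z.
Proof.
elim: x => [|x IH] hx z hz.
  by rewrite /G /V !big_geq // expr0 addr0.
have hxn : (x < n)%N by [].
have hbx := hb hxn.
have hbj : forall j, (j < x)%N -> b j != 0.
  move=> j hj; apply: hb; exact: ltn_trans hj hxn.
have hdj : forall j, (j < x)%N -> b j - b x != 0.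
  move=> j hj; rewrite subr_eq0; apply: hd => //; first exact: ltn_trans hj hxn.
  by apply/eqP => e; rewrite e ltnn in hj.
have hz0 : forall j, (j < x)%N -> 1 - b j * t * (b x * t)^-1 != 0.
  move=> j hj.
  have -> : 1 - b j * t * (b x * t)^-1 = (b x - b j) / b x.
    by field; rewrite hbx ht.
  rewrite mulf_neq0 ?invr_neq0 //.
  by rewrite -opprB oppr_eq0 hdj.
have hdj' : forall j, (j < x)%N -> b x - b j != 0.
  by move=> j hj; rewrite -opprB oppr_eq0 hdj.
have hDx := hz x (ltnSn x).
have hDj : forall j, (j < x)%N -> 1 - b j * t * z != 0.
  by move=> j hj; apply: hz; exact: ltnW.
rewrite G_step IH //; last exact: ltnW.
rewrite /V big_nat_recr //= RR_last.
have -> : \prod_(0 <= m < x) ((b x + c * b m) / (b x - b m)) = G x (b x * t)^-1.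
  apply: eq_big_nat => m /andP[_ hm]; rewrite /c.
  by field; rewrite ht hbx hdj'.
rewrite (IH _ (b x * t)^-1) //; last exact: ltnW.
have -> : \sum_(0 <= j < x) RR x.+1 j / (1 - b j * t * z) =
   \sum_(0 <= j < x) RR x j * ((b j + c * b x) / (b j - b x)) / (1 - b j * t * z).
  by apply: eq_big_nat => j /andP[_ hj]; rewrite RR_step.
rewrite /V.
set g := (1 + (1 - t) * b x * z) / (1 - b x * t * z).
have e1 : (\sum_(0 <= j < x) RR x j / (1 - b j * t * z)) * g =
  \sum_(0 <= j < x) RR x j * ((b j + c * b x) / (b j - b x)) / (1 - b j * t * z) +
  \sum_(0 <= j < x) t^-1 * (RR x j / (1 - b j * t * (b x * t)^-1)) / (1 - b x * t * z).
  rewrite big_distrl -big_split; apply: eq_big_nat => j /andP[_ hj] /=.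
  by rewrite /g /c; field; rewrite hDx ht hbx hdj' ?hDj ?hdj.
have e2 : q ^+ x * g = q ^+ x.+1 + t^-1 * q ^+ x / (1 - b x * t * z).
  by rewrite /g /q exprS; field; rewrite hDx ht.
rewrite mulrDl e1 e2 mulrDr mulrDl mulr_sumr mulr_suml.
ring.
Qed.

Lemma U0 x : (x <= n)%N -> U x 0 = 1 - q ^+ x.
Proof.
move=> hx.
have hz : forall j, (j < x)%N -> 1 - b j * t * 0 != 0.
  by move=> j _; rewrite mulr0 subr0 oner_eq0.
have e := GV hx hz.
have hG : G x 0 = 1 by rewrite /G big1 // => m _; rewrite !mulr0 addr0 subr0 divr1.
rewrite hG /V in e.
have -> : U x 0 = \sum_(0 <= j < x) RR x j / (1 - b j * t * 0).
  by apply: eq_bigr => j _; rewrite mulr0 subr0 divr1 expr0 mulr1.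
apply: (addrI (q ^+ x)); rewrite -e; ring.
Qed.

Lemma U_rec x k : (x.+1 <= n)%N ->
  U x.+1 k.+1 = U x k.+1 + b x * t * U x.+1 k + b x * (1 - t) * U x k.
Proof.
move=> hx; rewrite /U !big_nat_recr //=.
have hxn : (x < n)%N by [].
have hdj : forall j, (j < x)%N -> b j - b x != 0.
  move=> j hj; rewrite subr_eq0; apply: hd => //; first exact: ltn_trans hj hxn.
  by apply/eqP => e; rewrite e ltnn in hj.
have hs : forall k', \sum_(0 <= j < x) RR x.+1 j * (b j * t) ^+ k' =
   \sum_(0 <= j < x) RR x j * ((b j + c * b x) / (b j - b x)) * (b j * t) ^+ k'.
  by move=> k'; apply: eq_big_nat => j /andP[_ hj]; rewrite RR_step.
rewrite !hs.
have e : \sum_(0 <= j < x) RR x j * ((b j + c * b x) / (b j - b x)) * (b j * t) ^+ k.+1 =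
  \sum_(0 <= j < x) RR x j * (b j * t) ^+ k.+1 +
  b x * t * \sum_(0 <= j < x) RR x j * ((b j + c * b x) / (b j - b x)) * (b j * t) ^+ k +
  b x * (1 - t) * \sum_(0 <= j < x) RR x j * (b j * t) ^+ k.
  rewrite !mulr_sumr -!big_split; apply: eq_big_nat => j /andP[_ hj] /=.
  by rewrite /c !exprS; field; rewrite ht hdj.
rewrite e exprS; ring.
Qed.

Lemma thU (f : nat -> nat -> R) :
  (forall k, f 0%N k.+1 = 0) ->
  (forall x, (x.+1 <= n)%N -> f x.+1 1%N = f x 1%N + b x) ->
  (forall x k, (x.+1 <= n)%N ->
     f x.+1 k.+2 = f x k.+2 + b x * t * f x.+1 k.+1 + b x * (1 - t) * f x k.+1) ->
  forall x, (x <= n)%N -> forall k, f x k.+1 = U x k.+1.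
Proof.
move=> f0 f1 f2; elim=> [|x IH] hx k.
  by rewrite f0 /U big_geq.
have hx' : (x <= n)%N by exact: ltnW.
elim: k => [|k IHk].
  rewrite f1 // IH // U_rec // !U0 //.
  by rewrite /q exprS; field.
by rewrite f2 // IHk !IH // (@U_rec x k.+1).
Qed.
End Alg.

Theorem mainTheorem5 (R : realFieldType) (a : nat -> R) (n k : nat) (t : R)
  (hn : (1 <= n)%N) (hk : (1 <= k)%N) (ht : t != 0)
  (hpos : forall j : nat, (1 <= j <= n)%N -> 0 < a j)
  (hdist : forall i j : nat, (1 <= i <= n)%N -> (1 <= j <= n)%N -> i != j -> a i != a j) :
  theta a n k t =
  (-1) ^+ (n - 1) *
  \sum_(j < n)
    ((\prod_(m < n) ((1 - t) / (a j.+1 * t) + 1 / a m.+1)) /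
     (\prod_(l < n | l != j) (1 / a j.+1 - 1 / a l.+1))
     * a j.+1 ^+ k.+1 * t ^+ k).
Proof.
pose b := fun m => a m.+1.
have hb : forall m, (m < n)%N -> b m != 0.
  by move=> m hm; rewrite /b gt_eqF // hpos.
have hd : forall i j, (i < n)%N -> (j < n)%N -> i != j -> b i != b j.
  by move=> i j hi hj hij; rewrite /b hdist.
case: k hk => // k _.
have e1 : theta a n k.+1 t = th a n t n k.+1.
  apply: eq_bigl => l; rewrite /PP.
  have -> : all (fun y : 'I_n.+1 => (y <= n)%N) l by apply/allP => y _; rewrite -ltnS.
  by rewrite andbT.
have e2 : th a n t n k.+1 = U b t n k.+1.
  apply: (thU ht hb hd) => //.
  - by move=> k'; exact: th_zero.
  - by move=> x hx; exact: th_rec1.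
  - by move=> x k' hx; exact: th_rec2.
rewrite e1 e2 /U big_mkord mulr_sumr; apply: eq_bigr => j _.
rewrite /RR big_mkord -big_mkcond /=.
have hbj : b j != 0 by apply: hb.
have key : \prod_(i < n | i != j) ((b j + c t * b i) / (b j - b i)) =
  \prod_(i < n | i != j) (- (((1 - t) / (a j.+1 * t) + 1 / a i.+1) / (1 / a j.+1 - 1 / a i.+1))).
  apply: eq_bigr => i hij.
  have hbi : b i != 0 by apply: hb.
  have hji : b j - b i != 0 by rewrite subr_eq0 eq_sym; apply: hd => //.
  have hij' : b i - b j != 0 by rewrite subr_eq0; apply: hd => //.
  move: hbj hbi hji hij'; rewrite /c /b => hbj hbi hji hij'; field.
  by rewrite hbi hbj mulN1r hij' ht hji.
rewrite key prodrN cardC1 card_ord subn1 .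
rewrite [\prod_(m < n) _](bigD1 j) //=.
rewrite prodf_div.
have E : forall F : 'I_n -> R, \prod_(i in (fun i0 : 'I_n => i0 != j)) F i = \prod_(i < n | i != j) F i.
  by move=> F; apply: eq_bigl.
rewrite !E.
have haj : a j.+1 != 0 by apply: hbj.
rewrite /b !E exprMn (exprS (a j.+1) k.+1).
set s1 := (-1) ^+ n.-1.
set Pp := \prod_(i < n | i != j) _.
set Dd := \prod_(i < n | i != j) _.
set A1 := a j.+1 ^+ k.+1.
set T1 := t ^+ k.+1.
have hDd : Dd != 0.
  rewrite /Dd; apply/prodf_neq0 => i hij.
  rewrite subr_eq0 !div1r; apply/negP => /eqP /invr_inj e.
  have hji : (j : nat) != i by rewrite eq_sym; exact: hij.
  have := hd j i (ltn_ord j) (ltn_ord i) hji.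
  by rewrite /b e eqxx.
by field; rewrite hDd haj ht.
Qed.
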